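(* Let $(X,\mu)$ be a standard Borel space with a non-atomic Borel probability measure, and let $R_{12},R_{13},R_{23}$ be SP1 equivalence relations on $X$. For $\{i,j,k\}=\{1,2,3\}$ let $R_i=R_{ij}\vee R_{ik}$ (with $R_{ji}=R_{ij}$), and assume $R_i\cap R_j=R_{ij}$ for $i\ne j$; put $R_0=R_{12}\cap R_{13}\cap R_{23}$. Suppose $R=R_1\vee R_2\vee R_3=R_{12}\vee R_{23}\vee R_{13}$ is a minimal triangle join (i.e. with $E_i:=R_i$, $E_1\vee E_2\vee E_3$ is a triangle join over $R_{12},R_{23},R_{13}$). Then $R=R_1\vee R_2$, and \[R=R_1\ast_{R_{12}}R_2\iff R_3=R_{13}\ast_{R_0}R_{23}.\]
   Context: An SP1 equivalence relation on a standard Borel space $X$ with a non-atomic Borel probability measure $\mu$ is an equivalence relation $R\subset X\times X$ that is Borel, has countable classes, and preserves $\mu$. $S\vee T$ denotes the smallest SP equivalence relation containing $S$ and $T$. Free amalgamated join: for SP1 relations $S_1,S_2$ with common subrelation $T$, a sequence $x_1,\dots,x_n$ is reduced if each $(x_k,x_{k+1})$ lies in $S_1$ or $S_2$, successive pairs lie in distinct factors, for $n>2$ no pair lies in $T$, and for $n=2$, $x_1\ne x_2$. $S_1\vee S_2$ is the free amalgamated join $S_1\ast_T S_2$ if every reduced sequence has distinct endpoints (up to a set of measure zero). Triangle join: given SP1 relations $E_1,E_2,E_3$ with $R_{ij}=E_i\cap E_j$, $R_0=E_1\cap E_2\cap E_3$, $R_i=R_{ij}\vee R_{ik}$, $E_i^\circ=E_i\setminus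 R_i$, $R_{ij}^\circ=R_{ij}\setminus R_0$ ($\{i,j,k\}=\{1,2,3\}$): a sequence $x_1,\dots,x_n$ is triangle-reduced if (a) every consecutive pair lies in one of $E_1^\circ,E_2^\circ,E_3^\circ,R_{12}^\circ,R_{13}^\circ,R_{23}^\circ$ (its type); (b) if $(x_k,x_{k+1})\in E_l^\circ$ with $\{i,j,l\}=\{1,2,3\}$, each neighbouring pair (when it exists) lies in $E_i^\circ\sqcup E_j^\circ\sqcup R_{ij}^\circ$; (c) if $(x_k,x_{k+1})\in R_{ij}^\circ$ with $\{i,j,l\}=\{1,2,3\}$, each neighbouring pair (when it exists) lies in $E_l^\circ\sqcup R_{il}^\circ\sqcup R_{jl}^\circ$. It is proper of type I if its set of types contains one of $\{E_1^\circ,R_{23}^\circ\}$, $\{E_2^\circ,R_{13}^\circ\}$, $\{E_3^\circ,R_{12}^\circ\}$, $\{E_1^\circ,E_2^\circ\}$, $\{E_2^\circ,E_3^\circ\}$, $\{E_1^\circ,E_3^\circ\}$; proper of type II if its types include all of $R_{12}^\circ,R_{13}^\circ,R_{23}^\circ$ and none of the $E_i^\circ$. A loop is a sequence with $x_1=x_n$. $E_1\vee E_2\vee E_3$ is a triangle join over $R_{12},R_{23},R_{13}$ if every proper triangle-reduced sequence of type I has distinct endpoints and every proper triangle-reduced loop of type II is a concatenation of $R_i$-loops (closed subsequences whose consecutive pairs all lie in a single $R_i$). It is a minimal triangle join when $E_i=R_i$ for $i=1,2,3$. *)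

(* Defs.v *)
From HB Require Import structures.
From mathcomp Require Import all_boot all_order all_algebra.
From mathcomp Require Import all_classical all_reals all_analysis.

Set Implicit Arguments. Unset Strict Implicit. Unset Printing Implicit Defensive.
Import Order.TTheory GRing.Theory Num.Theory.
Local Open Scope classical_set_scope.
Local Open Scope ring_scope.

Section Defs.
Context {d : measure_display} {T : measurableType d} {R : realType}.

(** Standard Borel space: Borel isomorphic to a Borel subset of the reals
    (via an injective measurable map sending measurable sets to Borel sets). *)
Definition standard_borel : Prop :=
  exists f : T -> R, injective f /\ measurable_fun setT f /\
    (forall A : set T, measurable A -> measurable (f @` A)).

Definition nonatomic (mu : {measure set T -> \bar R}) : Prop :=
  forall A : set T, measurable A -> (0 < mu A)%E ->
    exists B : set T, [/\ measurable B, B `<=` A & (0 < mu B < mu A)%E].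

Definition equiv_rel (E : set (T * T)) : Prop :=
  [/\ forall x, E (x, x),
      forall x y, E (x, y) -> E (y, x) &
      forall x y z, E (x, y) -> E (y, z) -> E (x, z)].

Definition SP1 (mu : {measure set T -> \bar R}) (E : set (T * T)) : Prop :=
  [/\ equiv_rel E,
      measurable E,
      forall x, countable [set y | E (x, y)] &
      forall (A : set T) (phi : T -> T), measurable A -> measurable_fun A phi ->
        {in A &, injective phi} -> (forall x, A x -> E (x, phi x)) ->
        measurable (phi @` A) -> mu (phi @` A) = mu A].

Definition join (S S' : set (T * T)) : set (T * T) :=
  [set p | forall E, equiv_rel E -> S `<=` E -> S' `<=` E -> E p].

Definition reduced (S1 S2 T0 : set (T * T)) (n : nat) (x : nat -> T) : Prop :=
  [/\ (2 <= n)%N,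
      exists f : nat -> bool, forall k, (k.+1 < n)%N ->
        (if f k then S1 else S2) (x k, x k.+1) /\
        ((k.+2 < n)%N -> f k <> f k.+1),
      (2 < n)%N -> forall k, (k.+1 < n)%N -> ~ T0 (x k, x k.+1) &
      n = 2%N -> x 0%N <> x 1%N].

Definition free_amalg (mu : {measure set T -> \bar R})
    (S1 S2 T0 E : set (T * T)) : Prop :=
  [/\ E = join S1 S2, T0 `<=` S1 `&` S2 &
      exists N : set T, [/\ measurable N, mu N = 0%E &
        forall n x, reduced S1 S2 T0 n x -> ~ N (x 0%N) ->
          x 0%N <> x n.-1]].

(** Triangle joins.  Indices 1,2,3 are 'I_3.  The type [TE l] is E_l°, and
    [TR l] is R_ij° where {i,j,l} = {1,2,3} (labelled by the missing index). *)
Inductive ttype := TE of 'I_3 | TR of 'I_3.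

Section Triangle.
Variable E : 'I_3 -> set (T * T).

Definition Rc (l : 'I_3) : set (T * T) :=
  [set p | forall m : 'I_3, m != l -> E m p].
Definition R0 : set (T * T) := [set p | forall m : 'I_3, E m p].
Definition Ri (i : 'I_3) : set (T * T) :=
  [set p | forall Q, equiv_rel Q -> (forall m : 'I_3, m != i -> Rc m `<=` Q) -> Q p].

Definition trel (t : ttype) : set (T * T) :=
  match t with
  | TE l => E l `\` Ri l
  | TR l => Rc l `\` R0
  end.

Definition tcompat (t t' : ttype) : bool :=
  match t, t' with
  | TE l, TE m => l != m
  | TE l, TR m => l == m
  | TR l, TE m => l == m
  | TR l, TR m => l != m
  end.

Definition treduced_typed (n : nat) (x : nat -> T) (t : nat -> ttype) : Prop :=
  forall k, (k.+1 < n)%N -> trel (t k) (x k, x k.+1) /\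
    ((k.+2 < n)%N -> tcompat (t k) (t k.+1)).

Definition has_type (n : nat) (t : nat -> ttype) (u : ttype) : Prop :=
  exists2 k, (k.+1 < n)%N & t k = u.

Definition proper_I (n : nat) (t : nat -> ttype) : Prop :=
  (exists l, has_type n t (TE l) /\ has_type n t (TR l)) \/
  (exists l m, l != m /\ has_type n t (TE l) /\ has_type n t (TE m)).

Definition proper_II (n : nat) (t : nat -> ttype) : Prop :=
  (forall l, has_type n t (TR l)) /\ (forall l, ~ has_type n t (TE l)).

Definition concat_Ri_loops (n : nat) (x : nat -> T) : Prop :=
  exists (m : nat) (b : nat -> nat),
    [/\ b 0%N = 0%N, b m = n.-1,
        forall j, (j < m)%N -> (b j < b j.+1)%N,
        forall j, (j <= m)%N -> x (b j) = x 0%N &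
        forall j, (j < m)%N -> exists i : 'I_3,
          forall k, (b j <= k < b j.+1)%N -> Ri i (x k, x k.+1)].

Definition triangle_join (mu : {measure set T -> \bar R}) : Prop :=
  exists N : set T, [/\ measurable N, mu N = 0%E,
    (forall n x t, treduced_typed n x t -> proper_I n t -> ~ N (x 0%N) ->
        x 0%N <> x n.-1) &
    (forall n x t, treduced_typed n x t -> proper_II n t -> x 0%N = x n.-1 ->
        ~ N (x 0%N) -> concat_Ri_loops n x)].

End Triangle.

End Defs.

Definition fam3 {A : Type} (a b c : A) (i : 'I_3) : A :=
  match val i with 0 => a | 1 => b | _ => c end.

(* Main.v *)
Require Import Defs.
From HB Require Import structures.
From mathcomp Require Import all_boot all_order all_algebra.
From mathcomp Require Import all_classical all_reals all_analysis.
From mathcomp Require Import zify.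
From Stdlib Require Import Relation_Operators Operators_Properties.
Local Open Scope classical_set_scope.

Set Implicit Arguments. Unset Strict Implicit.

Inductive ty := T12 | T13 | T23.

Lemma eqv_refl d (X : measurableType d) (E : set (X * X)) : Defs.equiv_rel E -> forall x, E (x, x).
Proof. by case. Qed.
Lemma eqv_sym d (X : measurableType d) (E : set (X * X)) : Defs.equiv_rel E -> forall x y, E (x, y) -> E (y, x).
Proof. by case. Qed.
Lemma eqv_trans d (X : measurableType d) (E : set (X * X)) : Defs.equiv_rel E -> forall x y z, E (x, y) -> E (y, z) -> E (x, z).
Proof. by case. Qed.

Section Core.
Variable d : measure_display.
Variable X : measurableType d.
Variables S12 S13 S23 Q1 Q2 Q3 : set (X * X).
Hypotheses (e12 : Defs.equiv_rel S12) (e13 : Defs.equiv_rel S13) (e23 : Defs.equiv_rel S23).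
Hypotheses (s12_1 : S12 `<=` Q1) (s13_1 : S13 `<=` Q1) (s12_2 : S12 `<=` Q2)
  (s23_2 : S23 `<=` Q2) (s13_3 : S13 `<=` Q3) (s23_3 : S23 `<=` Q3).
Hypotheses (q12 : Q1 `&` Q2 `<=` S12) (q13 : Q1 `&` Q3 `<=` S13) (q23 : Q2 `&` Q3 `<=` S23).

Definition R0c := S12 `&` S13 `&` S23.
Definition srelT t := match t with T12 => S12 | T13 => S13 | T23 => S23 end.
Definition own (c : bool) := if c then T13 else T23.
Definition tyof (c sh : bool) := if sh then T12 else own c.
Definition Qof (c : bool) := if c then Q1 else Q2.

Lemma srel_eqv t : Defs.equiv_rel (srelT t). Proof. by case: t. Qed.
Lemma R0_sub t p : R0c p -> srelT t p.
Proof. by case: p => x y [[? ?] ?]; case: t. Qed.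
Lemma R0_refl x : R0c (x, x).
Proof. rewrite /R0c; split; [split|]; exact: eqv_refl. Qed.
Lemma R0_12 p : R0c p -> S12 p. Proof. by case=> [[]]. Qed.

Lemma own_Q c p : srelT (own c) p -> Qof (~~ c) p -> R0c p.
Proof.
rewrite /R0c; case: c => /= h hq.
- split; [split|] => //; [apply: q12 | apply: q23]; split => //; by auto.
- split; [split|] => //; [apply: q12 | apply: q13]; split => //; by auto.
Qed.
Lemma T12_Q3 p : S12 p -> Q3 p -> R0c p.
Proof. move=> h hq; rewrite /R0c; split; [split|] => //; [apply: q13 | apply: q23]; split => //; by auto. Qed.

Lemma tyof_own c sh : tyof c sh <> own (~~ c).
Proof. by case: c; case: sh. Qed.
Lemma tyof_own' c sh : tyof (~~ c) sh <> own c.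
Proof. by case: c; case: sh. Qed.
Lemma ty_cases2 c t : t <> own c -> t <> T12 -> t = own (~~ c).
Proof. by case: c; case: t. Qed.
Lemma ty_cases c t : t <> own c -> t <> own (~~ c) -> t = T12.
Proof. by case: c; case: t. Qed.
Lemma tyof_ne c c' sh sh' : c <> c' -> ~~ (sh && sh') -> tyof c sh <> tyof c' sh'.
Proof. by case: c; case: c'; case: sh; case: sh'. Qed.
Lemma tyof_inj c sh sh' : sh <> sh' -> tyof c sh <> tyof c sh'.
Proof. by case: c; case: sh; case: sh'. Qed.

Fixpoint bchain (c : bool) (u : X) (p : seq (bool * X)) : Prop :=
  if p is s :: p' then srelT (tyof c s.1) (u, s.2) /\ bchain c s.2 p' else True.
Definition endp (u : X) (p : seq (bool * X)) := last u (map snd p).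

Fixpoint pok (u : X) (p : seq (bool * X)) : Prop :=
  if p is s :: p' then
    [/\ ~ R0c (u, s.2), (if p' is s' :: _ then s.1 <> s'.1 else True) & pok s.2 p']
  else True.

Lemma strans t x y z : srelT t (x, y) -> srelT t (y, z) -> srelT t (x, z).
Proof. move=> h1 h2; exact: (eqv_trans (srel_eqv t) h1 h2). Qed.

Lemma path_red c : forall p u, bchain c u p ->
  pok u p \/ (exists p', [/\ bchain c u p', endp u p' = endp u p & size p' < size p])
  \/ (exists s, p = [:: s] /\ R0c (u, s.2)).
Proof.
elim=> [|s p IH] u /=; first by left.
case=> hs hc.
case: (IH _ hc) => [hp|[[p' [hc' he hsz]]|[s' [Ep hR]]]].
- have [hR|hR] := pselect (R0c (u, s.2)).
  + case: p hc hp {IH} => [|s' p] hc hp.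
    * by right; right; exists s.
    * right; left; exists (s' :: p); split => //=.
      case: hc => h1 h2; split => //; apply: strans h1; exact: R0_sub.
  + case: p hc hp {IH} => [|s' p] hc hp; first by left; split.
    have [heq|hne] := eqVneq s.1 s'.1.
    * right; left; exists ((s.1, s'.2) :: p); split => //=.
      case: hc => h1 h2; split => //; apply: strans hs _; by rewrite heq.
    * by left; split => //; apply/eqP.
- right; left; exists (s :: p'); split => //=.
- subst p; right; left; exists [:: (s.1, s'.2)]; split => //=.
  split => //; apply: strans hs _; exact: R0_sub.
Qed.

Variable a : X.

Fixpoint valid (pc : option bool) (u : X) (bs : seq (bool * seq (bool * X))) : Prop :=
  if bs is b :: bs' then
    [/\ pc <> Some b.1, bchain b.1 u b.2, ~ S12 (u, endp u b.2) & valid (Some b.1) (endp u b.2) bs']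
  else u = a.
Definition len (bs : seq (bool * seq (bool * X))) := sumn (map (fun b => size b.2) bs).

Fixpoint allred (u : X) (bs : seq (bool * seq (bool * X))) : Prop :=
  if bs is b :: bs' then
    [/\ pok u b.2,
        (if bs' is b' :: _ then ~~ ((last (false, a) b.2).1 && (head (false, a) b'.2).1) else True)
      & allred (endp u b.2) bs']
  else True.

Lemma bchain_rcons c u p s : bchain c u (rcons p s) -> bchain c u p /\ srelT (tyof c s.1) (endp u p, s.2).
Proof. by elim: p u => [|s' p IH] u /=; [case | case=> h1 /IH [h2 h3]]. Qed.

Lemma endp_rcons u p s : endp u (rcons p s) = s.2.
Proof. by rewrite /endp map_rcons last_rcons. Qed.

Lemma red_or_shorter bs : forall pc u, valid pc u bs ->
  allred u bs \/ exists bs', [/\ bs' <> [::], valid pc u bs' & len bs' < len bs].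
Proof.
elim: bs => [|[c p] bs IH] pc u /=; first by left.
case=> hpc hch hS hv.
case: (IH _ _ hv) => [har|[bs' [hne hv' hlt]]]; last first.
  right; exists ((c, p) :: bs'); split => //=.
  by rewrite /len /= ltn_add2l.
case: (path_red hch) => [hp|[[p' [hc' he hsz]]|[s [Ep hR]]]].
- case: bs IH hv har => [|[c' p2] bs] IH hv har; first by left; split.
  case hj: ((last (false, a) p).1 && (head (false, a) p2).1); last first.
    by left; split => //=; rewrite hj.
  move/andP: hj => [hl hh].
  right.
  case/lastP: p hch hS hp hl hv har => [|p0 s] hch hS hp hl hv har; first by [].
  rewrite last_rcons in hl.
  clear IH; case: p2 hh hv har => [//|s2 p2'] hh hv har.
  rewrite /= in hh.
  move: hv; rewrite endp_rcons /= => -[hcc' [hs2 hc2] hS2 hv2].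
  move: (bchain_rcons hch) => [hc0 hsl]; rewrite /tyof hl /= in hsl.
  rewrite /tyof hh /= in hs2.
  exists ((c, p0) :: (c', (true, s2.2) :: p2') :: bs); split => //=.
  + split => //.
    * move=> h; apply: hS; rewrite endp_rcons; exact: (eqv_trans e12 h hsl).
    * split => //.
      - split => //; rewrite /tyof /=; exact: (eqv_trans e12 hsl hs2).
      - move=> h; apply: hS2; rewrite /endp /= in h *.
        apply: (eqv_trans e12 _ h); exact: (eqv_sym e12 hsl).
  + rewrite /len /= size_rcons; lia.
- right; exists ((c, p') :: bs); split => //=; first by rewrite he.
  by rewrite /len /= ltn_add2r.
- exfalso; subst p; apply: hS; rewrite /endp /=; exact: R0_12.
Qed.


Definition fb (b : bool * seq (bool * X)) : seq (ty * X) := map (fun s => (tyof b.1 s.1, s.2)) b.2.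
Definition fl (bs : seq (bool * seq (bool * X))) := flatten (map fb bs).

Fixpoint twalk (u : X) (l : seq (ty * X)) : Prop :=
  if l is s :: l' then
    [/\ srelT s.1 (u, s.2), ~ R0c (u, s.2), (if l' is s' :: _ then s.1 <> s'.1 else True) & twalk s.2 l']
  else True.

Lemma twalk_cat l1 : forall u l2, twalk u l1 -> twalk (last u (map snd l1)) l2 ->
  (forall s s' l1' l2', l1 = rcons l1' s -> l2 = s' :: l2' -> s.1 <> s'.1) ->
  twalk u (l1 ++ l2).
Proof.
elim: l1 => [//|s l1 IH] u l2 /= [h1 h2 h3 h4] h5 h6; split => //.
- case: l1 IH h3 h4 h5 h6 => [|s1 l1] IH h3 h4 h5 h6 /=.
  + case: l2 h5 h6 => [//|s' l2] h5 h6; exact: (h6 s s' [::] l2).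
  + exact: h3.
- apply: IH => // t t' l1' l2' E1 E2; apply: (h6 t t' (s :: l1') l2') => //.
  by rewrite E1.
Qed.

Lemma map_snd_fb b : map snd (fb b) = map snd b.2.
Proof. by rewrite /fb -map_comp. Qed.
Lemma size_fb b : size (fb b) = size b.2.
Proof. by rewrite size_map. Qed.

Lemma twalk_block c u p : bchain c u p -> pok u p -> twalk u (fb (c, p)).
Proof.
elim: p u => [//|s p IH] u /= [h1 h2] [h3 h4 h5]; split => //.
- by case: p {IH h2 h5} h4 => [//|s' p] /= h4; apply: tyof_inj.
- exact: IH.
Qed.

Lemma bchain_ne (u : X) (p : seq (bool * X)) : ~ S12 (u, endp u p) -> p <> [::].
Proof. by move=> h E; apply: h; rewrite E /endp /=; exact: eqv_refl. Qed.

Lemma twalk_fl bs : forall pc u, valid pc u bs -> allred u bs -> twalk u (fl bs).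
Proof.
elim: bs => [//|[c p] bs IH] pc u /= [hpc hch hS hv] [hp hj har].
rewrite /fl /= -/(fl bs).
apply: twalk_cat; first exact: twalk_block.
  by rewrite map_snd_fb; apply: (IH _ _ hv).
move=> s s' l1' l2' E1 E2.
case: bs IH hv hj har E2 => [|[c' p2] bs] IH hv hj har E2; first by [].
move: hv => /= [hcc' hch2 hS2 hv2].
have := bchain_ne hS2; clear IH hp hch hS.
case: p2 {hch2 hS2 hv2 har} hj E2 => [//|s2 p2] hj E2 _.
case/lastP: p hj E1 => [|p0 s0] hj E1.
  by case: l1' E1 => [|? ?].
rewrite /fl /= in E2; case: E2 => <- _.
move: E1; rewrite /fb /= map_rcons => /rcons_inj [_ <-] /=.
rewrite last_rcons /= in hj.
apply: tyof_ne => //; by move=> E; apply: hcc'; rewrite E.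
Qed.

Lemma valid_last bs : forall pc u, valid pc u bs -> last u (map snd (fl bs)) = a.
Proof.
elim: bs => [//|[c p] bs IH] pc u /= [_ _ _ hv].
rewrite /fl /= map_cat last_cat map_snd_fb; exact: (IH _ _ hv).
Qed.

Definition xn (u : X) (l : seq (ty * X)) k := nth a (u :: map snd l) k.
Definition tn (l : seq (ty * X)) k := nth T12 (map fst l) k.

Lemma twalk_nth l : forall u, twalk u l -> forall k, k < size l ->
  [/\ srelT (tn l k) (xn u l k, xn u l k.+1), ~ R0c (xn u l k, xn u l k.+1)
    & (k.+1 < size l -> tn l k <> tn l k.+1)].
Proof.
elim: l => [//|s l IH] u /= [h1 h2 h3 h4] [|k] hk.
- split => //; case: l {IH} h3 h4 hk => [//|s' l] h3 h4 hk _; exact: h3.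
- exact: (IH _ h4 k hk).
Qed.

Lemma nth_size_last (l : seq X) u : nth a (u :: l) (size l) = last u l.
Proof. by elim: l u => [//|y l IH] u /=. Qed.

Lemma xn_cat u l1 l2 k : xn u (l1 ++ l2) k =
  if k <= size l1 then xn u l1 k else xn (last u (map snd l1)) l2 (k - size l1).
Proof.
rewrite /xn map_cat -cat_cons nth_cat /= size_map ltnS.
case: ifP => // hk.
have -> : k - size l1 = (k - (size l1).+1).+1 by move/negbT: hk; rewrite -ltnNge; lia.
by [].
Qed.

Lemma xn_size u l : xn u l (size l) = last u (map snd l).
Proof. by rewrite /xn -(size_map snd) nth_size_last. Qed.

Lemma tn_cat l1 l2 k : tn (l1 ++ l2) k = if k < size l1 then tn l1 k else tn l2 (k - size l1).
Proof. by rewrite /tn map_cat nth_cat size_map. Qed.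

Lemma tn_fb c p k : k < size p -> tn (fb (c, p)) k = tyof c (nth (true, a) p k).1.
Proof. by move=> hk; rewrite /tn /fb -map_comp (nth_map (true, a)). Qed.

Lemma own_step c u p : bchain c u p -> ~ S12 (u, endp u p) ->
  exists2 k, k < size p & (nth (true, a) p k).1 = false.
Proof.
elim: p u => [|s p IH] u /=.
  by move=> _ h; exfalso; apply: h; rewrite /endp; exact: eqv_refl.
case=> h1 h2 hS.
case hs: s.1; last by exists 0.
rewrite /tyof hs /= in h1.
case: (IH _ h2) => [h|k hk hk'].
  by apply: hS; rewrite /endp /=; exact: (eqv_trans e12 h1 h).
by exists k.+1.
Qed.

Lemma bchain_drop c p : forall u k, bchain c u p -> k <= size p ->
  bchain c (nth a (u :: map snd p) k) (drop k p) /\ endp (nth a (u :: map snd p) k) (drop k p) = endp u p.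
Proof.
elim: p => [|s p IH] u [|k] //= h hk; try by split.
case: h => _ h; exact: IH.
Qed.


Hypothesis HT : forall (L : nat) (x : nat -> X) (t : nat -> ty), x 0 = a -> x L = a ->
  (forall k, k < L -> srelT (t k) (x k, x k.+1) /\ ~ R0c (x k, x k.+1)) ->
  (forall k, k.+1 < L -> t k <> t k.+1) ->
  (exists2 k, k < L & t k = T12) -> (exists2 k, k < L & t k = T13) ->
  (exists2 k, k < L & t k = T23) ->
  exists b1, [/\ 0 < b1 <= L, x b1 = a &
     (forall k, k < b1 -> Q1 (x k, x k.+1)) \/ (forall k, k < b1 -> Q2 (x k, x k.+1)) \/
     (forall k, k < b1 -> Q3 (x k, x k.+1))].
Hypothesis H3 : forall (L : nat) (x : nat -> X) (t : nat -> ty), 0 < L -> x 0 = a -> x L = a ->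
  (forall k, k < L -> [/\ t k <> T12, srelT (t k) (x k, x k.+1) & ~ R0c (x k, x k.+1)]) ->
  (forall k, k.+1 < L -> t k <> t k.+1) -> False.

Theorem core bs : bs <> [::] -> valid None a bs -> False.
Proof.
move: {2}(len bs).+1 (ltnSn (len bs)) => n.
elim: n bs => [//|n IHn] bs hlt hne hv.
case: (red_or_shorter hv) => [har|[bs' [hne' hv' hlt']]]; last first.
  apply: (IHn bs') => //; lia.
have htw := twalk_fl hv har.
have hlast := valid_last hv.
case: bs hne hv har htw hlt hlast IHn => [//|[c p1] [|[c' p2] rest]] _ hv har htw hlt hlast IHn.
  move: hv => /= [_ _ hS E]; apply: hS; rewrite E; exact: eqv_refl.
set l := fl ((c, p1) :: (c', p2) :: rest) in htw hlast.
have El : l = fb (c, p1) ++ (fb (c', p2) ++ fl rest) by [].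
move: hv => /= [_ hc1 hS1 [hcc' hc2 hS2 hv3]].
have Ec' : c' = ~~ c by move: hcc'; case: (c); case: (c') => // h; exfalso; apply: h.
set x := xn a l; set t := tn l; set L := size l.
have TW := twalk_nth htw.
have xL : x L = a by rewrite /x /L xn_size.
have hj : 0 < size p1 by have := bchain_ne hS1; case: (p1).
have hj2 : 0 < size p2 by have := bchain_ne hS2; case: (p2).
have hL : L = size p1 + (size p2 + size (fl rest)) by rewrite /L El !size_cat !size_fb.
have xk1 : forall k, k <= size p1 -> x k = nth a (a :: map snd p1) k.
  by move=> k hk; rewrite /x El xn_cat size_fb hk /xn map_snd_fb.
have xj : x (size p1) = endp a p1.
  by rewrite xk1 // -(size_map snd p1) nth_size_last.
have xj2 : size p2 = 1 -> x (size p1).+1 = endp (endp a p1) p2.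
  move=> h2; rewrite /x El xn_cat size_fb ltnn subSnn xn_cat size_fb h2 leqnn.
  by rewrite /xn !map_snd_fb -h2 -(size_map snd p2) nth_size_last.
have t1 : forall k, k < size p1 -> t k = tyof c (nth (true, a) p1 k).1.
  by move=> k hk; rewrite /t El tn_cat size_fb hk tn_fb.
have t2 : forall k, size p1 <= k < size p1 + size p2 ->
    t k = tyof c' (nth (true, a) p2 (k - size p1)).1.
  move=> k /andP [hk1 hk2]; rewrite /t El tn_cat size_fb ltnNge hk1 /= tn_cat size_fb.
  have -> : k - size p1 < size p2 by lia.
  by rewrite tn_fb //; lia.
have t1' : forall k, k < size p1 -> t k <> own (~~ c).
  by move=> k hk; rewrite t1 //; apply: tyof_own.
have t2' : forall k, size p1 <= k < size p1 + size p2 -> t k <> own c.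
  by move=> k hk; rewrite t2 // Ec'; apply: tyof_own'.
have TWa : forall k, k < L -> srelT (t k) (x k, x k.+1) /\ ~ R0c (x k, x k.+1).
  by move=> k hk; case: (TW k hk).
have TWb : forall k, k.+1 < L -> t k <> t k.+1.
  by move=> k hk; case: (TW k (ltnW hk)) => _ _; apply.
have [k1 hk1 Ek1] : exists2 k, k < L & t k = own c.
  case: (own_step hc1 hS1) => k hk hk'; exists k; first lia.
  by rewrite t1 // hk'.
have [k2 hk2 Ek2] : exists2 k, k < L & t k = own (~~ c).
  case: (own_step hc2 hS2) => k hk hk'; exists (size p1 + k); first lia.
  rewrite t2 ?addKn ?hk' ?Ec' //; apply/andP; split; lia.
have noQ : forall dd k, k < L -> t k = own dd -> Qof (~~ dd) (x k, x k.+1) -> False.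
  move=> dd k hk Et hq; case: (TWa k hk) => hs hr; apply: hr.
  by apply: (@own_Q dd) => //; rewrite -Et.
have noQ3 : forall k, k < L -> t k = T12 -> Q3 (x k, x k.+1) -> False.
  move=> k hk Et hq; case: (TWa k hk) => hs hr; apply: hr.
  by apply: T12_Q3 => //; rewrite Et in hs.
have x0 : x 0 = a by [].
have [[k0 hk0 Ek0]|no12] := pselect (exists2 k, k < L & t k = T12); last first.
  apply: (@H3 L x t) => //; first lia.
  move=> k hk; case: (TWa k hk) => h1 h2; split => // E; apply: no12; by exists k.
have h13 : exists2 k, k < L & t k = T13.
  by move: Ek1 Ek2; case: (c) => /= E1 E2; [exists k1 | exists k2].
have h23 : exists2 k, k < L & t k = T23.
  by move: Ek1 Ek2; case: (c) => /= E1 E2; [exists k2 | exists k1].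
have [b1 [/andP [hb0 hbL] xb1 hQ]] := HT x0 xL TWa TWb (ex_intro2 _ _ k0 hk0 Ek0) h13 h23.
have Qc : forall dd, (forall k, k < b1 -> Qof dd (x k, x k.+1)) -> False.
  move=> dd hq.
  have [Edd|Edd] : dd = c \/ dd = ~~ c by case: (dd); case: (c); auto.
  - subst dd.
    case: (leqP b1 (size p1)) => hb.
    + apply: (IHn ((c, drop b1 p1) :: (c', p2) :: rest)) => //.
        rewrite /len /= size_drop; rewrite /len /= in hlt; lia.
      have [hd he] := bchain_drop hc1 hb.
      rewrite -xk1 // xb1 in hd he.
      by rewrite /= he; split => //; split.
    + have hjL : size p1 < L by lia.
      have Etj : t (size p1) = T12.
        apply: (ty_cases (c := c)).
          apply: t2'; apply/andP; split => //; lia.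
        move=> E; apply: (noQ (~~ c) (size p1)) => //; rewrite negbK; exact: hq.
      have hs12 : S12 (x (size p1), x (size p1).+1).
        by case: (TWa _ hjL); rewrite Etj.
      rewrite xj in hs12.
      case: (ltnP (size p1).+1 b1) => hb2; last first.
        have Eb : b1 = (size p1).+1 by lia.
        rewrite -Eb xb1 in hs12; apply: hS1; exact: (eqv_sym e12 hs12).
      have [E2|E2] : size p2 = 1 \/ 1 < size p2 by lia.
        by apply: hS2; rewrite -xj2.
      have hj1L : (size p1).+1 < L by lia.
      apply: (noQ (~~ c) (size p1).+1) => //; last by rewrite negbK; apply: hq.
      apply: ty_cases2.
      + apply: t2'; apply/andP; split; lia.
      + by move=> E; apply: (TWb _ hj1L); rewrite Etj E.
  - subst dd.
    have hL0 : 0 < L by lia.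
    have Et0 : t 0 = T12.
      apply: (ty_cases (c := c)); last exact: t1'.
      by move=> E; apply: (noQ c 0) => //; apply: hq.
    case: (ltnP 1 b1) => hb1; last first.
      have Eb : b1 = 1 by lia.
      case: (TWa 0 hL0) => _; rewrite x0 -Eb xb1; apply; exact: R0_refl.
    have hL1 : 1 < L by lia.
    have [E1|E1] : size p1 = 1 \/ 1 < size p1 by lia.
      case: (TWa 0 hL0); rewrite Et0 x0 -E1 xj => h _; exact: hS1.
    apply: (noQ c 1) => //; last by apply: hq.
    have := ty_cases2 (c := ~~ c) (t := t 1); rewrite negbK; apply; first by apply: t1'; lia.
    by move=> E; apply: (TWb 0 hL1); rewrite Et0 E.
case: hQ => [h|[h|h]]; [exact: (Qc true) | exact: (Qc false) |].
apply: (@H3 b1 x t) => //.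
- move=> k hk; have hkL : k < L by lia.
  case: (TWa k hkL) => h1 h2; split => // E; exact: (noQ3 k hkL E (h k hk)).
- move=> k hk; apply: TWb; lia.
Qed.

End Core.


Section JoinFacts.
Variable d : measure_display.
Variable X : measurableType d.

Lemma join_eqv (S S' : set (X * X)) : Defs.equiv_rel (join S S').
Proof.
split.
- by move=> x E hE _ _; exact: eqv_refl.
- by move=> x y h E hE h1 h2; apply: (eqv_sym hE); exact: h.
- by move=> x y z h h' E hE h1 h2; apply: (eqv_trans hE (h E hE h1 h2) (h' E hE h1 h2)).
Qed.

Lemma join_l (S S' : set (X * X)) : S `<=` join S S'.
Proof. by move=> p hp E _ h1 _; exact: h1. Qed.
Lemma join_r (S S' : set (X * X)) : S' `<=` join S S'.
Proof. by move=> p hp E _ _ h2; exact: h2. Qed.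
Lemma join_min (S S' E : set (X * X)) : Defs.equiv_rel E -> S `<=` E -> S' `<=` E -> join S S' `<=` E.
Proof. by move=> hE h1 h2 p hp; exact: hp. Qed.

Fixpoint pch (S S' : set (X * X)) (u : X) (p : seq (bool * X)) : Prop :=
  if p is s :: p' then (if s.1 then S else S') (u, s.2) /\ pch S S' s.2 p' else True.

Lemma join_path (S S' : set (X * X)) : Defs.equiv_rel S -> Defs.equiv_rel S' ->
  forall u v, join S S' (u, v) -> exists p, pch S S' u p /\ last u (map snd p) = v.
Proof.
move=> hS hS' u v h.
pose U := fun x y => S (x, y) \/ S' (x, y).
have hE : Defs.equiv_rel [set q | clos_refl_trans X U q.1 q.2].
  split.
  - by move=> x; apply: rt_refl.
  - move=> x y /= h1; elim: h1 => [x' y' [h2|h2]| x' | x' y' z' _ IH1 _ IH2].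
    + by apply: rt_step; left; exact: (eqv_sym hS).
    + by apply: rt_step; right; exact: (eqv_sym hS').
    + exact: rt_refl.
    + exact: (rt_trans _ _ _ _ _ IH2 IH1).
  - by move=> x y z /= h1 h2; exact: (rt_trans _ _ _ _ _ h1 h2).
have hs1 : S `<=` [set q | clos_refl_trans X U q.1 q.2].
  by move=> [x y] hp; apply: rt_step; left.
have hs2 : S' `<=` [set q | clos_refl_trans X U q.1 q.2].
  by move=> [x y] hp; apply: rt_step; right.
have := join_min hE hs1 hs2 h.
move=> /= hc.
suff hsuff : forall x y, clos_refl_trans_1n X U x y -> exists p, pch S S' x p /\ last x (map snd p) = y.
  exact: hsuff (clos_rt_rt1n _ _ _ _ hc).
move=> {hc h} x0 y0; elim => [x|x y z hxy _ [p [hp hl]]].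
  by exists [::].
case: hxy => hxy.
- by exists ((true, y) :: p).
- by exists ((false, y) :: p).
Qed.

End JoinFacts.

Definition tidx (t : ty) : 'I_3 :=
  match t with T23 => @Ordinal 3 0 isT | T13 => @Ordinal 3 1 isT | T12 => @Ordinal 3 2 isT end.
Definition isT13 (t : ty) := if t is T13 then true else false.

Lemma tidx_inj t t' : t <> t' -> tidx t != tidx t'.
Proof. by case: t; case: t'. Qed.

Lemma tidx_surj (l : 'I_3) : exists t, tidx t = l.
Proof.
case: l => [[|[|[|m]]] hm].
- by exists T23; apply: val_inj.
- by exists T13; apply: val_inj.
- by exists T12; apply: val_inj.
- by [].
Qed.

Lemma Ri_sub d (X : measurableType d) (E : 'I_3 -> set (X * X)) i :
  Defs.equiv_rel (E i) -> Ri E i `<=` E i.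
Proof.
move=> hE p h; apply: h => // m hm q hq; apply: hq; by rewrite eq_sym.
Qed.

Unset Implicit Arguments.

Theorem theorem4p4 (d : measure_display) (X : measurableType d) (R : realType)
    (mu : probability X R)
    (R12 R13 R23 : set (X * X)) :
  @standard_borel d X R ->
  nonatomic mu ->
  SP1 mu R12 -> SP1 mu R13 -> SP1 mu R23 ->
  let R1 := join R12 R13 in
  let R2 := join R12 R23 in
  let R3 := join R13 R23 in
  R1 `&` R2 = R12 -> R1 `&` R3 = R13 -> R2 `&` R3 = R23 ->
  let R0 := R12 `&` R13 `&` R23 in
  let Rall := join (join R1 R2) R3 in
  Rall = join (join R12 R23) R13 ->
  triangle_join (fam3 R1 R2 R3) mu ->
  Rall = join R1 R2 /\
  (free_amalg mu R1 R2 R12 Rall <-> free_amalg mu R13 R23 R0 R3).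
Proof.
move=> _ _ [e12 _ _ _] [e13 _ _ _] [e23 _ _ _] R1 R2 R3 H12 H13 H23 R0 Rall _
  [N [mN N0 _ HN]].
have eR1 : Defs.equiv_rel R1 by exact: join_eqv.
have eR2 : Defs.equiv_rel R2 by exact: join_eqv.
have eR3 : Defs.equiv_rel R3 by exact: join_eqv.
have s12_1 : R12 `<=` R1 by exact: join_l.
have s13_1 : R13 `<=` R1 by exact: join_r.
have s12_2 : R12 `<=` R2 by exact: join_l.
have s23_2 : R23 `<=` R2 by exact: join_r.
have s13_3 : R13 `<=` R3 by exact: join_l.
have s23_3 : R23 `<=` R3 by exact: join_r.
have q12 : R1 `&` R2 `<=` R12 by rewrite H12.
have q13 : R1 `&` R3 `<=` R13 by rewrite H13.
have q23 : R2 `&` R3 `<=` R23 by rewrite H23.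
have hRall : Rall = join R1 R2.
  apply/seteqP; split.
  - apply: join_min; [exact: join_eqv | by [] |].
    apply: join_min; first exact: join_eqv.
    + by move=> p hp; apply: join_l; exact: s13_1.
    + by move=> p hp; apply: join_r; exact: s23_2.
  - by move=> p hp; apply: join_l.
split => //.
split.
-
  move=> [_ _ [N12 [mN12 N12_0 HF]]]; split => //.
    by move=> p [[h1 h2] h3]; split.
  exists N12; split => // n x [hn [f hf] hT h2] hN.
  apply: HF => //; split => //.
  + exists f => k hk; case: (hf k hk) => h1 h1'; split => //.
    by case: (f k) h1 => h1; [exact: s13_1 | exact: s23_2].
  + move=> hn2 k hk h; apply: (hT hn2 k hk).
    case: (hf k hk) => h1 _; move: h1; case: (f k) => h1.
    * split; [split|] => //; apply: q23; split; [exact: s12_2 | exact: s13_3].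
    * split; [split|] => //; apply: q13; split; [exact: s12_1 | exact: s23_3].
-
  move=> [_ _ [N3 [mN3 N3_0 HF3]]]; split => //.
    by move=> p hp; split; [exact: s12_1 | exact: s12_2].
  exists (N `|` N3); split.
  + exact: measurableU.
  + by rewrite measureU0.
  move=> n x [hn [f hf] hT h2] hN hx.
  have hNa : ~ N (x 0) by move=> h; apply: hN; left.
  have hN3a : ~ N3 (x 0) by move=> h; apply: hN; right.
  have [En2|hn2] : n = 2 \/ 2 < n by lia.
    by apply: (h2 En2); rewrite hx En2.
  have hp : forall k, exists p, k.+1 < n ->
      bchain R12 R13 R23 (f k) (x k) p /\ endp (x k) p = x k.+1.
    move=> k; case: (ltnP k.+1 n) => hk; last by exists [::].
    case: (hf k hk) => hs _.
    move: hs; case hfk: (f k) => hs.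
    + have [p [hpc hpl]] := join_path e12 e13 hs.
      exists p => _; split => //.
      elim: p (x k) hpc {hpl} => [//|[sh y] p IH] u /= [g1 g2]; split; last exact: IH.
      by case: sh g1.
    + have [p [hpc hpl]] := join_path e12 e23 hs.
      exists p => _; split => //.
      elim: p (x k) hpc {hpl} => [//|[sh y] p IH] u /= [g1 g2]; split; last exact: IH.
      by case: sh g1.
  case: (choice hp) => P hP.
  have hv : forall m k, k + m = n.-1 ->
      valid R12 R13 R23 (x 0) (if k is k'.+1 then Some (f k') else None) (x k)
        (map (fun k => (f k, P k)) (iota k m)).
    elim=> [|m IH] k hkm /=.
      by rewrite addn0 in hkm; rewrite hkm -hx.
    have hk : k.+1 < n by lia.
    have [hb he] := hP k hk.
    split => //.
    + case: k {IH hkm hb he} hk => [//|k] hk [] E.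
      case: (hf k (ltnW hk)) => _ h; exact: (h hk).
    + by rewrite he; exact: (hT hn2 k hk).
    + rewrite he; apply: (IH k.+1); lia.
  apply: (core e12 e13 e23 s12_1 s13_1 s12_2 s23_2 s13_3 s23_3 q12 q13 q23
          (a := x 0) _ _ (bs := map (fun k => (f k, P k)) (iota 0 n.-1))).
  +
    move=> L y t y0 yL hst halt [k0 hk0 Ek0] [k1 hk1 Ek1] [k2 hk2 Ek2].
    pose tt := fun k => TR (tidx (t k)).
    have := HN L.+1 y tt.
    case.
    * move=> k hk; split.
      - case: (hst k hk) => hs hr; split.
        + move=> m; move: hs; case: (t k) => hs /=;
          case: m => [[|[|[|m]]] hm] //= _; first [exact: s12_1 hs | exact: s12_2 hs | exact: s13_1 hs | exact: s13_3 hs | exact: s23_2 hs | exact: s23_3 hs].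
        + move=> h; apply: hr; split; [split|].
          * by apply: q12; split; [exact: (h (@Ordinal 3 0 isT)) | exact: (h (@Ordinal 3 1 isT))].
          * by apply: q13; split; [exact: (h (@Ordinal 3 0 isT)) | exact: (h (@Ordinal 3 2 isT))].
          * by apply: q23; split; [exact: (h (@Ordinal 3 1 isT)) | exact: (h (@Ordinal 3 2 isT))].
      - move=> hkk; rewrite /tt /=; apply: tidx_inj; exact: halt.
    * split.
      - move=> l; have [t0 <-] := tidx_surj l.
        case: t0; [exists k0 | exists k1 | exists k2] => //; by rewrite /tt ?Ek0 ?Ek1 ?Ek2.
      - by move=> l [k _].
    * by rewrite y0 yL.
    * by rewrite y0.
    move=> m [b [b0 bm binc bx bseg]].
    case: m bm binc bx bseg => [|m] bm binc bx bseg.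
      by rewrite b0 /= in bm; lia.
    have hmono : forall i, i <= m -> b 1 <= b i.+1.
      elim=> [//|i IH] hi; apply: leq_trans (IH (ltnW hi)) _; apply: ltnW; apply: binc; lia.
    have hb1L : b 1 <= L by have := hmono m (leqnn m); rewrite bm.
    exists (b 1); split.
    * apply/andP; split => //; have := binc 0 isT; rewrite b0 //.
    * by rewrite (bx 1 isT) y0.
    * have [i hi] := bseg 0 isT.
      have hseg : forall k, k < b 1 -> Ri (fam3 R1 R2 R3) i (y k, y k.+1).
        by move=> k hk; apply: hi; rewrite b0 hk.
      case: i hseg {hi} => [[|[|[|i]]] hi] // hseg.
      - left => k hk; exact: (@Ri_sub _ _ (fam3 R1 R2 R3) (Ordinal hi) eR1 _ (hseg k hk)).
      - right; left => k hk; exact: (@Ri_sub _ _ (fam3 R1 R2 R3) (Ordinal hi) eR2 _ (hseg k hk)).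
      - right; right => k hk; exact: (@Ri_sub _ _ (fam3 R1 R2 R3) (Ordinal hi) eR3 _ (hseg k hk)).
  +
    move=> L y t hL y0 yL hst halt.
    have [EL|hL2] : L = 1 \/ 1 < L by lia.
      subst L; case: (hst 0 isT) => _ _; rewrite y0 yL; apply.
      exact: (R0_refl e12 e13 e23).
    apply: (HF3 L.+1 y) => //; last by rewrite y0 yL.
    split; first lia.
    * exists (fun k => isT13 (t k)) => k hk; case: (hst k hk) => g1 g2 g3; split.
      - by move: g1 g2; case: (t k).
      - move=> hk2; have := halt k hk2; case: (hst k.+1 hk2) => g1' _ _.
        by move: g1 g1'; case: (t k); case: (t k.+1).
    * by move=> _ k hk; case: (hst k hk).
    * by move=> E; lia.
    * by rewrite y0.
  + have : 0 < n.-1 by lia.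
    by case: (n.-1).
  + have := hv n.-1 0 erefl; by [].
Qed.
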